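(* Let $A[1:n]$ be an array of $n$ items drawn from the universe $U=\{0,\dots,u-1\}$. For every fixed $\epsilon \in [0,1/2]$ there exists a static data structure using $O(n^{2-2\epsilon})$ words of storage that, given any query indices $1 \le i \le j \le n$, returns a mode of the multiset $\{A[i],A[i+1],\dots,A[j]\}$ in $O(n^{\epsilon})$ time in the worst case.
   Context: Model: word RAM with word size $\Theta(\log u)$, where elements are drawn from $U=\{0,\dots,u-1\}$. The frequency of an element $x$ in a multiset $S$ is its multiplicity in $S$. A mode of a multiset $S$ is an element $a\in S$ such that $\operatorname{freq}_S(x)\le \operatorname{freq}_S(a)$ for all $x\in S$. $A[i:j]$ denotes the subarray $A[i],\dots,A[j]$, regarded as a multiset for the purpose of computing modes. *)

(* Defs.v *)
From Stdlib Require Import Reals List Arith.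
Import ListNotations.

Definition freq (S : list nat) (x : nat) : nat := count_occ Nat.eq_dec S x.

Definition is_mode (S : list nat) (a : nat) : Prop :=
  In a S /\ forall x, In x S -> freq S x <= freq S a.

(** [A[i:j]] with 1-based inclusive indices. *)
Definition subarray (A : list nat) (i j : nat) : list nat :=
  firstn (j - i + 1) (skipn (i - 1) A).

Inductive instr : Type :=
  | IConst (d : nat) (c : nat)
  | IAdd (d a b : nat)
  | ISub (d a b : nat)                  (* R[d] := (R[a] - R[b]) mod 2^w *)
  | IMul (d a b : nat)
  | IDiv (d a b : nat)                  (* R[d] := R[a] / R[b]  (0 if R[b]=0) *)
  | IAnd (d a b : nat)
  | IOr  (d a b : nat)
  | IShl (d a b : nat)
  | IShr (d a b : nat)
  | ILt  (d a b : nat)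
  | IEq  (d a b : nat)
  | ILoad (d a : nat)
  | IStore (a s : nat)
  | IJz (r target : nat)
  | IJmp (target : nat)
  | IHalt.

Definition program := list instr.

Record state := mkState { pc : nat; regs : nat -> nat; mem : nat -> nat }.

Definition upd (f : nat -> nat) (k v : nat) : nat -> nat :=
  fun x => if Nat.eqb x k then v else f x.

Definition wmod (w v : nat) : nat := v mod 2 ^ w.

Definition arith (w : nat) (s : state) (d : nat) (v : nat) : state :=
  mkState (S (pc s)) (upd (regs s) d (wmod w v)) (mem s).

Definition step (w : nat) (i : instr) (s : state) : state :=
  let R := regs s in
  match i with
  | IConst d c => arith w s d c
  | IAdd d a b => arith w s d (R a + R b)
  | ISub d a b => arith w s d (R a + 2 ^ w - R b)
  | IMul d a b => arith w s d (R a * R b)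
  | IDiv d a b => arith w s d (R a / R b)
  | IAnd d a b => arith w s d (Nat.land (R a) (R b))
  | IOr d a b => arith w s d (Nat.lor (R a) (R b))
  | IShl d a b => arith w s d (Nat.shiftl (R a) (R b))
  | IShr d a b => arith w s d (Nat.shiftr (R a) (R b))
  | ILt d a b => arith w s d (if Nat.ltb (R a) (R b) then 1 else 0)
  | IEq d a b => arith w s d (if Nat.eqb (R a) (R b) then 1 else 0)
  | ILoad d a => arith w s d (mem s (R a))
  | IStore a r => mkState (S (pc s)) R (upd (mem s) (R a) (R r))
  | IJz r t => mkState (if Nat.eqb (R r) 0 then t else S (pc s)) R (mem s)
  | IJmp t => mkState t R (mem s)
  | IHalt => s
  end.

(** [exec w P t s = Some R] iff program [P] started in state [s] executes
    [IHalt] within at most [t] steps (the halt counting as one step),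
    with final register file [R]. *)
Fixpoint exec (w : nat) (P : program) (fuel : nat) (s : state)
  : option (nat -> nat) :=
  match fuel with
  | 0 => None
  | S f =>
      match nth_error P (pc s) with
      | None => None
      | Some IHalt => Some (regs s)
      | Some i => exec w P f (step w i s)
      end
  end.

(** Initial query state: memory holds the data structure [D] (cells beyond
    it are 0), register 1 holds [i], register 2 holds [j]. *)
Definition query_state (D : list nat) (i j : nat) : state :=
  mkState 0
    (fun r => if Nat.eqb r 1 then i else if Nat.eqb r 2 then j else 0)
    (fun a => nth a D 0).

(* Main.v *)
Require Import Defs.
From Stdlib Require Import Reals List Arith.
From Stdlib Require Import Lra Lia ZArith.
Import ListNotations.
Open Scope bool_scope.
Open Scope nat_scope.

Lemma firstn_add_app {T} (a d : nat) (l : list T) :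
  firstn (a + d) l = firstn a l ++ firstn d (skipn a l).
Proof.
  revert l; induction a as [|a IH]; intros l; simpl; auto.
  destruct l; simpl; auto. rewrite firstn_nil; auto. f_equal; auto.
Qed.

Definition Cnt (X : list nat) (x q : nat) : nat := count_occ Nat.eq_dec (firstn q X) x.

Lemma Cnt_add X x a d :
  Cnt X x (a + d) = Cnt X x a + count_occ Nat.eq_dec (firstn d (skipn a X)) x.
Proof. unfold Cnt. rewrite firstn_add_app, count_occ_app. auto. Qed.

Lemma Cnt_mono X x a b : a <= b -> Cnt X x a <= Cnt X x b.
Proof. intros H. replace b with (a + (b - a)) by lia. rewrite Cnt_add. lia. Qed.

Lemma Cnt_lip X x a b : a <= b -> Cnt X x b <= Cnt X x a + (b - a).
Proof.
  intros H. replace b with (a + (b - a)) at 1 by lia. rewrite Cnt_add.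
  pose proof (count_occ_bound Nat.eq_dec x (firstn (b - a) (skipn a X))).
  rewrite length_firstn in H0. lia.
Qed.

Lemma Cnt_0 X x : Cnt X x 0 = 0.
Proof. reflexivity. Qed.

Lemma Cnt_S X x q : q < length X ->
  Cnt X x (S q) = Cnt X x q + (if Nat.eq_dec (nth q X 0) x then 1 else 0).
Proof.
  intros H. replace (S q) with (q + 1) by lia. rewrite Cnt_add. f_equal.
  destruct (skipn q X) eqn:E.
  - apply (f_equal (@length nat)) in E. rewrite length_skipn in E. simpl in E. lia.
  - assert (nth q X 0 = n).
    { rewrite <- (firstn_skipn q X) at 1. rewrite E, app_nth2; rewrite length_firstn; [|lia].
      replace (q - Nat.min q (length X)) with 0 by lia. reflexivity. }
    subst. simpl. destruct (Nat.eq_dec (nth q X 0) x); auto.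
Qed.

Lemma Cnt_full X x : Cnt X x (length X) = count_occ Nat.eq_dec X x.
Proof. unfold Cnt. rewrite firstn_all. auto. Qed.

Lemma Cnt_beyond X x q : length X <= q -> Cnt X x q = Cnt X x (length X).
Proof. intros. unfold Cnt. rewrite !firstn_all2; auto. Qed.

Lemma freq_subarray A x i j : 1 <= i -> i <= j ->
  freq (subarray A i j) x = Cnt A x j - Cnt A x (i - 1).
Proof.
  intros. unfold freq, subarray.
  replace j with ((i - 1) + (j - i + 1)) at 2 by lia. rewrite Cnt_add. lia.
Qed.

Lemma Cnt_rev A x q : q <= length A ->
  Cnt (rev A) x q = Cnt A x (length A) - Cnt A x (length A - q).
Proof.
  intros H. unfold Cnt at 1. rewrite firstn_rev, count_occ_rev.
  pose proof (Cnt_add A x (length A - q) q).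
  replace (length A - q + q) with (length A) in H0 by lia.
  rewrite H0. rewrite firstn_all2.
  2:{ rewrite length_skipn. lia. } lia.
Qed.

Lemma first_occ X x a b : a < b -> Cnt X x a < Cnt X x b ->
  exists p, a < p <= b /\ Cnt X x (p - 1) = Cnt X x a /\ Cnt X x p = S (Cnt X x a).
Proof.
  induction b as [|b IH]; intros H1 H2. lia.
  destruct (Nat.eq_dec (Cnt X x b) (Cnt X x a)).
  - exists (S b). replace (S b - 1) with b by lia. split; [lia|split; auto].
    assert (Cnt X x (S b) <= Cnt X x b + 1) by (pose proof (Cnt_lip X x b (S b)); lia). lia.
  - assert (a < b). { destruct (Nat.eq_dec a b); subst; [lia|lia]. }
    assert (Cnt X x a <= Cnt X x b) by (apply Cnt_mono; lia).
    destruct IH as [p Hp]; auto. lia. exists p; lia.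
Qed.

Lemma Cnt_step_val X x p : 1 <= p -> Cnt X x p = S (Cnt X x (p - 1)) -> nth (p - 1) X 0 = x.
Proof.
  intros H1 H2. destruct (le_lt_dec p (length X)).
  - replace p with (S (p - 1)) in H2 at 1 by lia. rewrite Cnt_S in H2 by lia.
    destruct (Nat.eq_dec (nth (p - 1) X 0) x); auto. lia.
  - rewrite (Cnt_beyond X x p), (Cnt_beyond X x (p - 1)) in H2; lia.
Qed.

Definition modeof (l : list nat) : nat :=
  fold_right (fun a best => if freq l best <? freq l a then a else best) 0 l.

Lemma modeof_gen l s : forall y, In y s ->
  freq l y <= freq l (fold_right (fun a best => if freq l best <? freq l a then a else best) 0 s).
Proof.
  induction s as [|a s IH]; simpl; intros y Hy. contradiction.
  set (b := fold_right _ 0 s) in *.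
  destruct (Nat.ltb_spec (freq l b) (freq l a)).
  - destruct Hy; subst; auto. specialize (IH y H0). lia.
  - destruct Hy; subst; auto.
Qed.

Lemma modeof_spec l y : freq l y <= freq l (modeof l).
Proof.
  destruct (in_dec Nat.eq_dec y l).
  - apply modeof_gen; auto.
  - unfold freq at 1. rewrite (proj1 (count_occ_not_In _ _ _) n). lia.
Qed.

Lemma modeof_in0 l : modeof l = 0 \/ In (modeof l) l.
Proof.
  unfold modeof.
  assert (forall s, fold_right (fun a best => if freq l best <? freq l a then a else best) 0 s = 0
     \/ In (fold_right (fun a best => if freq l best <? freq l a then a else best) 0 s) s).
  { induction s as [|a s IH]; simpl. auto.
    destruct (freq l _ <? freq l a); [right; left; auto|]. destruct IH; auto. }
  apply H.
Qed.

Lemma filter_all_true {T} (f : T -> bool) l : (forall q, In q l -> f q = true) -> filter f l = l.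
Proof. induction l; simpl; intros H; auto. rewrite H by auto. f_equal; auto. Qed.
Lemma filter_all_false {T} (f : T -> bool) l : (forall q, In q l -> f q = false) -> filter f l = [].
Proof. induction l; simpl; intros H; auto. rewrite H by auto. auto. Qed.

Definition posk (X : list nat) (y k : nat) : nat :=
  length (filter (fun q => Cnt X y q <=? k) (seq 0 (S (length X)))).
Definition region X y := map (posk X y) (seq 0 (Cnt X y (length X))).
Definition POS X V := concat (map (region X) (seq 0 V)).
Definition off X y := list_sum (map (fun z => Cnt X z (length X)) (seq 0 y)).
Definition xat X p := nth (p - 1) X 0.
Definition Gp X p := off X (xat X p) + Cnt X (xat X p) (p - 1).
Definition EXp X p := off X (xat X p) + Cnt X (xat X p) (length X).

Lemma posk_le X y k jj : jj <= length X -> (posk X y k <= jj <-> k < Cnt X y jj).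
Proof.
  intros Hj. unfold posk.
  replace (S (length X)) with (jj + (S (length X) - jj)) by lia.
  rewrite seq_app, filter_app, length_app. split.
  - intros H. destruct (Nat.lt_ge_cases k (Cnt X y jj)) as [|Hc]; auto. exfalso.
    assert (filter (fun q => Cnt X y q <=? k) (seq 0 jj) = seq 0 jj).
    { apply filter_all_true. intros q Hq. apply in_seq in Hq. apply Nat.leb_le.
      pose proof (Cnt_mono X y q jj). lia. }
    rewrite H0, length_seq in H.
    replace (S (length X) - jj) with (S (length X - jj)) in H by lia.
    simpl in H. replace (0 + jj) with jj in H by lia.
    assert (Cnt X y jj <=? k = true) by (apply Nat.leb_le; lia). rewrite H1 in H. simpl in H. lia.
  - intros H. rewrite (filter_all_false _ (seq (0 + jj) _)).
    + simpl. pose proof (filter_length_le (fun q => Cnt X y q <=? k) (seq 0 jj)). rewrite length_seq in H0. lia.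
    + intros q Hq. apply in_seq in Hq. apply Nat.leb_gt. pose proof (Cnt_mono X y jj q). lia.
Qed.

Lemma length_region X y : length (region X y) = Cnt X y (length X).
Proof. unfold region. rewrite length_map, length_seq. auto. Qed.

Lemma length_concat_region X y : length (concat (map (region X) (seq 0 y))) = off X y.
Proof.
  rewrite length_concat, map_map. unfold off. f_equal. apply map_ext. intros; apply length_region.
Qed.

Lemma POS_nth X V y k : y < V -> k < Cnt X y (length X) ->
  nth (off X y + k) (POS X V) 0 = posk X y k.
Proof.
  intros Hy Hk. unfold POS.
  replace V with (y + (S (V - y - 1))) by lia. rewrite seq_app, map_app, concat_app.
  rewrite <- length_concat_region, app_nth2_plus. simpl.
  rewrite app_nth1 by (rewrite length_region; lia).
  unfold region. rewrite nth_indep with (d' := posk X y 0) by (rewrite length_map, length_seq; auto).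
  rewrite map_nth, seq_nth by auto. auto.
Qed.

Lemma off_S X y : off X (S y) = off X y + Cnt X y (length X).
Proof. unfold off. rewrite seq_S, map_app, list_sum_app. simpl. lia. Qed.

Lemma off_mono X y z : y <= z -> off X y <= off X z.
Proof. induction 1; auto. rewrite off_S. lia. Qed.

Lemma sum_indicator a s m : list_sum (map (fun z => if Nat.eq_dec a z then 1 else 0) (seq s m)) =
  if (s <=? a) && (a <? s + m) then 1 else 0.
Proof.
  revert s; induction m; intros s; simpl.
  - destruct (s <=? a) eqn:E; simpl; auto. apply Nat.leb_le in E. destruct (a <? s + 0) eqn:F; auto.
    apply Nat.ltb_lt in F; lia.
  - rewrite IHm. destruct (Nat.eq_dec a s).
    + subst. rewrite (proj2 (Nat.leb_nle (S s) s)) by lia. rewrite Nat.leb_refl.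
      rewrite (proj2 (Nat.ltb_lt s (s + S m))) by lia. auto.
    + destruct (S s <=? a) eqn:E1; destruct (s <=? a) eqn:E2; destruct (a <? S s + m) eqn:E3;
      destruct (a <? s + S m) eqn:E4; simpl;
      repeat match goal with H : (_ <=? _) = _ |- _ => first [apply Nat.leb_le in H | apply Nat.leb_gt in H] 
                        | H : (_ <? _) = _ |- _ => first [apply Nat.ltb_lt in H | apply Nat.ltb_ge in H] end; lia.
Qed.

Lemma off_total X V : Forall (fun x => x < V) X -> off X V = length X.
Proof.
  intros H. unfold off.
  assert (forall z, Cnt X z (length X) = count_occ Nat.eq_dec X z) by (intros; apply Cnt_full).
  rewrite (map_ext _ _ H0). clear H0.
  induction X as [|a X IH]; simpl.
  - induction (seq 0 V); simpl; auto.
  - inversion H; subst.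
    transitivity (list_sum (map (fun z => if Nat.eq_dec a z then 1 else 0) (seq 0 V)) +
                  list_sum (map (count_occ Nat.eq_dec X) (seq 0 V))).
    + clear. induction (seq 0 V); simpl; auto. rewrite IHl. destruct (Nat.eq_dec a a0); lia.
    + rewrite IH by auto. rewrite sum_indicator.
      rewrite (proj2 (Nat.leb_le 0 a)) by lia. rewrite (proj2 (Nat.ltb_lt a (0 + V))) by lia. simpl. lia.
Qed.

Lemma EXp_le X V p : Forall (fun x => x < V) X -> xat X p < V -> EXp X p <= length X.
Proof.
  intros H Hx. unfold EXp. rewrite <- off_S. rewrite <- (off_total X V H). apply off_mono. lia.
Qed.

Lemma Gp_le_EXp X p : Gp X p <= EXp X p.
Proof. unfold Gp, EXp. pose proof (Cnt_mono X (xat X p) (p - 1) (length X)).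
  destruct (le_lt_dec (p - 1) (length X)). specialize (H l); lia.
  rewrite Cnt_beyond by lia. lia. Qed.

Lemma check_iff X V p jj h : Forall (fun x => x < V) X -> xat X p < V -> jj <= length X ->
  (Gp X p + h < EXp X p /\ nth (Gp X p + h) (POS X V) 0 < S jj) <->
  h < Cnt X (xat X p) jj - Cnt X (xat X p) (p - 1).
Proof.
  intros HV Hx Hj. unfold Gp, EXp. set (x := xat X p).
  pose proof (Cnt_mono X x jj (length X) Hj).
  split.
  - intros [H1 H2]. rewrite <- Nat.add_assoc in H2. rewrite POS_nth in H2 by (auto; lia).
    assert (posk X x (Cnt X x (p - 1) + h) <= jj) by lia.
    apply posk_le in H0; auto. lia.
  - intros H1. split. lia. rewrite <- Nat.add_assoc. rewrite POS_nth by (auto; lia).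
    assert (posk X x (Cnt X x (p - 1) + h) <= jj) by (apply posk_le; auto; lia). lia.
Qed.

Definition ccv (X : list nat) (jj p : nat) : nat :=
  Cnt X (xat X p) jj - Cnt X (xat X p) (p - 1).

Fixpoint phase (X : list nat) (jj p cnt f m : nat) : nat * nat :=
  match cnt with
  | 0 => (f, m)
  | S c => if f <? ccv X jj p then phase X jj (S p) c (ccv X jj p) (xat X p)
           else phase X jj (S p) c f m
  end.

Lemma phase_mono X jj p cnt f m : f <= fst (phase X jj p cnt f m).
Proof.
  revert p f m; induction cnt; intros p f m; simpl; auto.
  destruct (Nat.ltb_spec f (ccv X jj p)).
  - specialize (IHcnt (S p) (ccv X jj p) (xat X p)). lia.
  - apply IHcnt.
Qed.

Lemma phase_ge X jj p cnt f m q : p <= q < p + cnt -> ccv X jj q <= fst (phase X jj p cnt f m).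
Proof.
  revert p f m; induction cnt; intros p f m Hq; simpl. lia.
  destruct (Nat.eq_dec q p).
  - subst. destruct (Nat.ltb_spec f (ccv X jj p)).
    + apply phase_mono.
    + pose proof (phase_mono X jj (S p) cnt f m). lia.
  - destruct (f <? ccv X jj p); apply IHcnt; lia.
Qed.

Lemma phase_sound X jj p cnt f m (Fv : nat -> nat) :
  (forall q, p <= q < p + cnt -> ccv X jj q <= Fv (xat X q)) ->
  f <= Fv m -> fst (phase X jj p cnt f m) <= Fv (snd (phase X jj p cnt f m)).
Proof.
  revert p f m; induction cnt; intros p f m H Hf; simpl; auto.
  destruct (Nat.ltb_spec f (ccv X jj p)); apply IHcnt; auto; try (intros; apply H; lia).
Qed.

Lemma phase_bound X jj p cnt f m Bd :
  (forall q, p <= q < p + cnt -> ccv X jj q <= Bd) ->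
  fst (phase X jj p cnt f m) <= Nat.max f Bd.
Proof.
  revert p f m; induction cnt; intros p f m H; simpl. lia.
  destruct (Nat.ltb_spec f (ccv X jj p)).
  - assert (ccv X jj p <= Bd) by (apply H; lia).
    specialize (IHcnt (S p) (ccv X jj p) (xat X p) ltac:(intros; apply H; lia)). lia.
  - apply IHcnt; intros; apply H; lia.
Qed.

Lemma phase_complete X jj ii cnt f m x e :
  1 <= ii -> e <= ii + cnt - 1 -> e <= jj -> Cnt X x (ii - 1) < Cnt X x e ->
  Cnt X x jj - Cnt X x (ii - 1) <= fst (phase X jj ii cnt f m).
Proof.
  intros H1 H2 H3 H4.
  assert (ii - 1 < e).
  { destruct (le_lt_dec e (ii - 1)); auto. pose proof (Cnt_mono X x e (ii - 1) l). lia. }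
  destruct (first_occ X x (ii - 1) e H H4) as [q [Hq1 [Hq2 Hq3]]].
  assert (xat X q = x). { unfold xat. apply Cnt_step_val; [lia|]. rewrite Hq3, Hq2. auto. }
  assert (ccv X jj q = Cnt X x jj - Cnt X x (ii - 1)) by (unfold ccv; rewrite H0, Hq2; auto).
  rewrite <- H5. apply phase_ge. lia.
Qed.

Definition spanl (A : list nat) (b Lb Rb : nat) := firstn (b * Rb - b * Lb) (skipn (b * Lb) A).

Lemma count_spanl A b Lb Rb z :
  freq (spanl A b Lb Rb) z = Cnt A z (b * Lb + (b * Rb - b * Lb)) - Cnt A z (b * Lb).
Proof. unfold freq, spanl. rewrite Cnt_add. lia. Qed.

Section Main.
Variables (A : list nat) (b i j : nat).
Hypotheses (Hb : 1 <= b) (Hi : 1 <= i) (Hij : i <= j) (Hj : j <= length A).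
Let n := length A.
Let Lb := (i + b - 2) / b.
Let Rb := j / b.
Let hi1 := Nat.min (b * Lb + 1) (n + 1).
Let sp := spanl A b Lb Rb.
Let f0 := freq sp (modeof sp).
Let m0 := modeof sp.
Let r1 := phase A j i (hi1 - i) f0 m0.
Let r2 := phase (rev A) (n + 1 - i) (n + 1 - j) (j - b * Rb) (fst r1) (snd r1).

Lemma Lb_bounds : i - 1 <= b * Lb /\ b * Lb <= i + b - 2.
Proof.
  unfold Lb. pose proof (Nat.div_mod (i + b - 2) b ltac:(lia)).
  pose proof (Nat.mod_upper_bound (i + b - 2) b ltac:(lia)). lia.
Qed.
Lemma Rb_bounds : b * Rb <= j /\ j < b * Rb + b.
Proof.
  unfold Rb. pose proof (Nat.div_mod j b ltac:(lia)).
  pose proof (Nat.mod_upper_bound j b ltac:(lia)). lia.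
Qed.

Let Fv z := Cnt A z j - Cnt A z (i - 1).

Lemma rev_conv z t : t <= n -> Cnt (rev A) z t = Cnt A z n - Cnt A z (n - t).
Proof. intros; apply Cnt_rev; auto. Qed.

Lemma f0_le z : freq sp z <= f0.
Proof. apply modeof_spec. Qed.

Lemma spfreq z : freq sp z <= Fv z.
Proof.
  unfold sp. rewrite count_spanl. unfold Fv. pose proof Lb_bounds; pose proof Rb_bounds.
  destruct (Nat.eq_dec (b * Rb - b * Lb) 0) as [E|E].
  - rewrite E, Nat.add_0_r. lia.
  - pose proof (Cnt_mono A z (i - 1) (b * Lb) ltac:(lia)).
    pose proof (Cnt_mono A z (b * Lb + (b * Rb - b * Lb)) j ltac:(lia)). lia.
Qed.

Lemma sound1 : forall q, i <= q < i + (hi1 - i) -> ccv A j q <= Fv (xat A q).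
Proof.
  intros q Hq. unfold ccv, Fv. pose proof (Cnt_mono A (xat A q) (i - 1) (q - 1) ltac:(lia)). lia.
Qed.

Lemma sound2 : forall q, n + 1 - j <= q < n + 1 - j + (j - b * Rb) ->
  ccv (rev A) (n + 1 - i) q <= Fv (xat (rev A) q).
Proof.
  intros q Hq. pose proof Rb_bounds as RB. unfold ccv, Fv. set (z := xat (rev A) q).
  rewrite !rev_conv by (clear -Hq Hi Hij Hj RB; lia).
  pose proof (Cnt_mono A z (n - (q - 1)) (n - (n - j))).
  pose proof (Cnt_mono A z (n - (n + 1 - i)) (n - (q - 1))).
  pose proof (Cnt_mono A z j n). pose proof (Cnt_mono A z (i-1) j).
  replace (n - (n + 1 - i)) with (i - 1) in * by (clear -Hi Hij Hj; lia).
  replace (n - (n - j)) with j in * by (clear -Hi Hij Hj; lia). lia.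
Qed.

Lemma f2_sound : fst r2 <= Fv (snd r2).
Proof.
  unfold r2. apply phase_sound. apply sound2.
  unfold r1. apply phase_sound. apply sound1.
  unfold f0, m0. apply spfreq.
Qed.

Lemma f2_complete z : Fv z <= fst r2.
Proof.
  destruct Lb_bounds as [LB1 LB2]; destruct Rb_bounds as [RB1 RB2].
  assert (M1 : fst r1 <= fst r2) by apply phase_mono.
  assert (Hh : i <= hi1) by (unfold hi1; lia).
  assert (Hn : j <= n) by (unfold n; lia).
  set (a1 := Nat.min (b * Lb) j).
  destruct (Nat.lt_ge_cases (Cnt A z (i - 1)) (Cnt A z a1)) as [C1|C1].
  { assert (E1 : a1 <= i + (hi1 - i) - 1) by (unfold a1, hi1; lia).
    assert (E2 : a1 <= j) by (unfold a1; lia).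
    pose proof (phase_complete A j i (hi1 - i) f0 m0 z a1 Hi E1 E2 C1) as P.
    unfold Fv. fold r1 in P. lia. }
  set (t := Nat.min (n - b * Rb) (n + 1 - i)).
  assert (Ht : t <= n) by (unfold t; lia).
  destruct (Nat.lt_ge_cases (Cnt (rev A) z (n + 1 - j - 1)) (Cnt (rev A) z t)) as [C2|C2].
  { assert (E0 : 1 <= n + 1 - j) by lia.
    assert (E1 : t <= n + 1 - j + (j - b * Rb) - 1) by (unfold t; lia).
    assert (E2 : t <= n + 1 - i) by (unfold t; lia).
    pose proof (phase_complete (rev A) (n + 1 - i) (n + 1 - j) (j - b * Rb) (fst r1) (snd r1) z t
      E0 E1 E2 C2) as P.
    fold r2 in P. rewrite !rev_conv in P by (clear -Hi Hij Hn Ht; lia).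
    replace (n - (n + 1 - i)) with (i - 1) in P by (clear -Hi Hij Hn; lia).
    replace (n - (n + 1 - j - 1)) with j in P by (clear -Hi Hij Hn; lia).
    pose proof (Cnt_mono A z j n Hn). unfold Fv. clear -P H. lia. }
  rewrite !rev_conv in C2 by (clear -Hi Hij Hn Ht; lia).
  replace (n - (n + 1 - j - 1)) with j in C2 by (clear -Hi Hij Hn; lia).
  replace (n - t) with (Nat.max (b * Rb) (i - 1)) in C2 by (unfold t; clear -Hi Hij Hn RB1; lia).
  set (mx := Nat.max (b * Rb) (i - 1)) in *.
  assert (Q1 : Cnt A z j <= Cnt A z n) by (apply Cnt_mono; clear -Hn; lia).
  assert (Q2 : Cnt A z (i - 1) <= Cnt A z a1) by (apply Cnt_mono; unfold a1; clear -LB1 Hij Hi; lia).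
  assert (Q3 : Cnt A z mx <= Cnt A z j) by (apply Cnt_mono; unfold mx; clear -RB1 Hij Hi; lia).
  assert (EQ1 : Cnt A z mx = Cnt A z j) by (clear -C2 Q1 Q3; lia).
  assert (EQ2 : Cnt A z a1 = Cnt A z (i - 1)) by (clear -C1 Q2; lia).
  unfold Fv. rewrite <- EQ1, <- EQ2.
  destruct (le_lt_dec mx a1) as [l|l].
  { pose proof (Cnt_mono A z _ _ l) as K. clear -K. lia. }
  assert (EA : a1 = b * Lb) by (unfold a1, mx in *; clear -l LB1 LB2 RB1 RB2 Hij; lia).
  assert (EM : mx = b * Rb) by (unfold a1, mx in *; clear -l LB1 LB2 RB1 RB2 Hij; lia).
  rewrite EA, EM.
  pose proof (f0_le z) as F. unfold sp in F. rewrite count_spanl in F.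
  replace (b * Lb + (b * Rb - b * Lb)) with (b * Rb) in F by (clear -l EA EM; lia).
  pose proof (phase_mono A j i (hi1 - i) f0 m0) as F2. fold r1 in F2. fold f0 in F.
  clear -F F2 M1. lia.
Qed.

Theorem main_mode : is_mode (subarray A i j) (snd r2).
Proof.
  pose proof f2_sound. pose proof (f2_complete (xat A i)).
  assert (1 <= Fv (xat A i)).
  { unfold Fv. pose proof (Cnt_mono A (xat A i) i j Hij) as K1.
    pose proof (Cnt_S A (xat A i) (i - 1) ltac:(unfold n in *; lia)) as K2.
    replace (S (i - 1)) with i in K2 by lia.
    destruct (Nat.eq_dec (nth (i - 1) A 0) (xat A i)) as [_|C]; [|exfalso; apply C; reflexivity].
    clear -K1 K2. lia. }
  split.
  - apply (count_occ_In Nat.eq_dec). fold (freq (subarray A i j) (snd r2)).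
    rewrite freq_subarray by lia. fold (Fv (snd r2)). lia.
  - intros x _. rewrite !freq_subarray by lia. fold (Fv x). fold (Fv (snd r2)).
    pose proof (f2_complete x). lia.
Qed.

Lemma Fv_le z : Fv z <= f0 + 2 * b.
Proof.
  pose proof Lb_bounds; pose proof Rb_bounds. unfold Fv.
  destruct (le_lt_dec (b * Lb) (b * Rb)).
  - pose proof (f0_le z). unfold sp in H1. rewrite count_spanl in H1.
    replace (b * Lb + (b * Rb - b * Lb)) with (b * Rb) in H1 by lia.
    pose proof (Cnt_lip A z (b * Rb) j ltac:(lia)).
    pose proof (Cnt_lip A z (i - 1) (b * Lb) ltac:(lia)). fold f0 in H1. lia.
  - pose proof (Cnt_lip A z (i - 1) j ltac:(lia)). lia.
Qed.

Lemma f2_bound : fst r2 <= f0 + 2 * b.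
Proof.
  unfold r2. eapply Nat.le_trans. apply phase_bound with (Bd := f0 + 2 * b).
  { intros. eapply Nat.le_trans. apply sound2; auto. apply Fv_le. }
  unfold r1. pose proof (phase_bound A j i (hi1 - i) f0 m0 (f0 + 2 * b)
    ltac:(intros; eapply Nat.le_trans; [apply sound1; auto| apply Fv_le])). lia.
Qed.

Lemma Fv_le_n z : Fv z <= n.
Proof. unfold Fv. pose proof (Cnt_lip A z 0 j ltac:(lia)). rewrite Cnt_0 in H. lia. Qed.

Lemma f0_le_n : f0 <= n.
Proof.
  unfold f0, freq. eapply Nat.le_trans. apply count_occ_bound. unfold sp, spanl.
  rewrite length_firstn, length_skipn. lia.
Qed.

Lemma f2_le_n : fst r2 <= n.
Proof.
  unfold r2. eapply Nat.le_trans. apply phase_bound with (Bd := n).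
  { intros. eapply Nat.le_trans. apply sound2; auto. apply Fv_le_n. }
  unfold r1. pose proof (phase_bound A j i (hi1 - i) f0 m0 n
    ltac:(intros; eapply Nat.le_trans; [apply sound1; auto| apply Fv_le_n])).
  pose proof f0_le_n. lia.
Qed.

End Main.

Lemma divmod_eq q d r : r < d -> (q * d + r) / d = q /\ (q * d + r) mod d = r.
Proof.
  intros H. split.
  - symmetry. apply Nat.div_unique with r; lia.
  - symmetry. apply Nat.mod_unique with q; lia.
Qed.

Definition Lbf b p := (p + b - 2) / b.
Definition base k n := 14 + k * S n.
Definition TBase n := 14 + 14 * S n.
Definition Tdim n b := n / b + 2.
Definition Vof (A : list nat) := S (list_max A).

Definition arr (A : list nat) (b k p : nat) : nat :=
  let n := length A in
  match k with
  | 0 => TBase n + 2 * Tdim n b * Lbf b p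
  | 1 => 2 * (p / b)
  | 2 => Nat.min (b * Lbf b p + 1) (n + 1)
  | 3 => Gp A p
  | 4 => EXp A p
  | 5 => nth p (POS A (Vof A)) 0
  | 6 => xat A p
  | 7 => Gp (rev A) p
  | 8 => EXp (rev A) p
  | 9 => nth p (POS (rev A) (Vof A)) 0
  | 10 => xat (rev A) p
  | 11 => n + 1 - p
  | 12 => n + 1 - b * (p / b)
  | _ => n + 2 - p
  end.

Definition tabent (A : list nat) (b t : nat) : nat :=
  let Td := Tdim (length A) b in
  let q := t / 2 in let sp := spanl A b (q / Td) (q mod Td) in
  if t mod 2 =? 0 then freq sp (modeof sp) else modeof sp.

Definition cell (A : list nat) (b a : nat) : nat :=
  let n := length A in
  if a <? 14 then base a n
  else if a <? TBase n then arr A b ((a - 14) / S n) ((a - 14) mod S n)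
  else tabent A b (a - TBase n).

Definition total (A : list nat) (b : nat) := TBase (length A) + 2 * (Tdim (length A) b * Tdim (length A) b).
Definition Dmk (A : list nat) (b : nat) : list nat := map (cell A b) (seq 0 (total A b)).

Lemma length_Dmk A b : length (Dmk A b) = total A b.
Proof. unfold Dmk. rewrite length_map, length_seq. auto. Qed.

Lemma nth_Dmk A b a : a < total A b -> nth a (Dmk A b) 0 = cell A b a.
Proof.
  intros H. unfold Dmk. rewrite nth_indep with (d' := cell A b 0) by (rewrite length_map, length_seq; auto).
  rewrite map_nth, seq_nth; auto.
Qed.

Lemma cell_hdr A b a : a < 14 -> cell A b a = base a (length A).
Proof. intros H. unfold cell. rewrite (proj2 (Nat.ltb_lt a 14) H). auto. Qed.

Lemma cell_arr A b k p : k < 14 -> p <= length A ->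
  cell A b (base k (length A) + p) = arr A b k p.
Proof.
  intros Hk Hp. unfold cell, base, TBase.
  rewrite (proj2 (Nat.ltb_ge _ 14)) by lia.
  rewrite (proj2 (Nat.ltb_lt _ _)) by nia.
  replace (14 + k * S (length A) + p - 14) with (k * S (length A) + p) by lia.
  destruct (divmod_eq k (S (length A)) p ltac:(lia)) as [E1 E2]. rewrite E1, E2. auto.
Qed.

Lemma cell_tab A b x y c : c < 2 -> x < Tdim (length A) b -> y < Tdim (length A) b ->
  cell A b (TBase (length A) + 2 * Tdim (length A) b * x + 2 * y + c) =
  (if c =? 0 then freq (spanl A b x y) (modeof (spanl A b x y)) else modeof (spanl A b x y)).
Proof.
  intros Hc Hx Hy. unfold cell.
  rewrite (proj2 (Nat.ltb_ge _ 14)) by (unfold TBase; lia).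
  rewrite (proj2 (Nat.ltb_ge _ _)) by lia.
  unfold tabent.
  set (Td := Tdim (length A) b) in *.
  replace (TBase (length A) + 2 * Td * x + 2 * y + c - TBase (length A)) with ((x * Td + y) * 2 + c) by lia.
  destruct (divmod_eq (x * Td + y) 2 c Hc) as [E1 E2]. rewrite E1, E2.
  destruct (divmod_eq x Td y Hy) as [E3 E4]. rewrite E3, E4. auto.
Qed.

Lemma Lbf_lt n b p : 1 <= b -> p <= n -> Lbf b p < Tdim n b.
Proof.
  intros Hb Hp. unfold Lbf, Tdim.
  assert ((p + b - 2) / b <= (n + 1 * b) / b) by (apply Nat.Div0.div_le_mono; lia).
  rewrite Nat.div_add in H by lia. lia.
Qed.

Lemma div_lt_Tdim n b p : 1 <= b -> p <= n -> p / b < Tdim n b.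
Proof.
  intros Hb Hp. unfold Tdim. assert (p / b <= n / b) by (apply Nat.Div0.div_le_mono; lia). lia.
Qed.

Lemma POS_bound X V : Forall (fun v => v <= S (length X)) (POS X V).
Proof.
  unfold POS. apply Forall_forall. intros v Hv. apply in_concat in Hv.
  destruct Hv as [l [Hl Hv]]. apply in_map_iff in Hl. destruct Hl as [y [<- _]].
  unfold region in Hv. apply in_map_iff in Hv. destruct Hv as [k [<- _]].
  unfold posk. pose proof (filter_length_le (fun q => Cnt X y q <=? k) (seq 0 (S (length X)))).
  rewrite length_seq in H. lia.
Qed.

Lemma nth_bound (l : list nat) B p : Forall (fun v => v <= B) l -> nth p l 0 <= B.
Proof.
  intros H. destruct (le_lt_dec (length l) p). rewrite nth_overflow by auto. lia.
  rewrite Forall_forall in H. apply H. apply nth_In. auto.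
Qed.

Lemma Vof_spec A : Forall (fun x => x < Vof A) A.
Proof.
  unfold Vof. apply Forall_forall. intros x Hx.
  pose proof (proj1 (list_max_le A (list_max A)) (le_n _)). rewrite Forall_forall in H.
  specialize (H x Hx). lia.
Qed.

Lemma Vof_rev A : Forall (fun x => x < Vof A) (rev A).
Proof. apply Forall_forall. intros x Hx. apply in_rev in Hx. pose proof (Vof_spec A).
  rewrite Forall_forall in H. auto. Qed.

Lemma xat_lt X V p : Forall (fun x => x < V) X -> 0 < V -> xat X p < V.
Proof.
  intros H HV. unfold xat. destruct (le_lt_dec (length X) (p - 1)). rewrite nth_overflow by auto. auto.
  rewrite Forall_forall in H. apply H. apply nth_In. auto.
Qed.

Lemma modeof_lt l V : Forall (fun x => x < V) l -> 0 < V -> modeof l < V.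
Proof.
  intros H HV. destruct (modeof_in0 l) as [E|E]. lia. rewrite Forall_forall in H. auto.
Qed.

Lemma Forall_firstn' {T} (P : T -> Prop) k l : Forall P l -> Forall P (firstn k l).
Proof. intros H. rewrite <- (firstn_skipn k l) in H. apply Forall_app in H. tauto. Qed.
Lemma Forall_skipn' {T} (P : T -> Prop) k l : Forall P l -> Forall P (skipn k l).
Proof. intros H. rewrite <- (firstn_skipn k l) in H. apply Forall_app in H. tauto. Qed.

Lemma spanl_forall A b x y V : Forall (fun v => v < V) A -> Forall (fun v => v < V) (spanl A b x y).
Proof. intros H. unfold spanl. apply Forall_firstn', Forall_skipn'. auto. Qed.

Lemma Gp_le X V p : Forall (fun x => x < V) X -> 0 < V -> Gp X p <= length X /\ EXp X p <= length X.
Proof.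
  intros H HV. pose proof (xat_lt X V p H HV). pose proof (EXp_le X V p H H0).
  pose proof (Gp_le_EXp X p). lia.
Qed.

Lemma cell_bound A b a : 1 <= b -> a < total A b -> cell A b a <= total A b + Vof A + length A + 2.
Proof.
  intros Hb Ha. set (n := length A).
  assert (HV := Vof_spec A). assert (HVr := Vof_rev A). assert (V0 : 0 < Vof A) by (unfold Vof; lia).
  unfold cell. fold n.
  destruct (Nat.ltb_spec a 14). { unfold base, total, TBase. fold n. nia. }
  destruct (Nat.ltb_spec a (TBase n)).
  - assert (Hk : (a - 14) / S n < 14).
    { apply Nat.Div0.div_lt_upper_bound. unfold TBase in *. lia. }
    assert (Hp : (a - 14) mod S n <= n) by (pose proof (Nat.mod_upper_bound (a - 14) (S n)); lia).
    set (k := (a - 14) / S n) in *. set (p := (a - 14) mod S n) in *.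
    unfold arr. fold n.
    pose proof (Gp_le A _ p HV V0). pose proof (Gp_le (rev A) _ p HVr V0). rewrite length_rev in H2.
    destruct k as [|[|[|[|[|[|[|[|[|[|[|[|[|k]]]]]]]]]]]]].
    + pose proof (Lbf_lt n b p Hb Hp). unfold total. fold n.
      assert (Tdim n b * Lbf b p <= Tdim n b * Tdim n b) by nia. lia.
    + assert (p / b <= p) by (apply Nat.div_le_upper_bound; nia). unfold total, TBase. fold n. lia.
    + unfold total, TBase. fold n. lia.
    + lia.
    + lia.
    + pose proof (nth_bound _ _ p (POS_bound A (Vof A))). fold n in H3. unfold total, TBase. fold n. lia.
    + pose proof (xat_lt A _ p HV V0). lia.
    + lia.
    + lia.
    + pose proof (nth_bound _ _ p (POS_bound (rev A) (Vof A))). rewrite length_rev in H3. fold n in H3.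
      unfold total, TBase. fold n. lia.
    + pose proof (xat_lt (rev A) _ p HVr V0). lia.
    + lia.
    + lia.
    + lia.
  - unfold tabent. fold n. set (t := a - TBase n). set (q := t / 2). set (Td := Tdim n b).
    set (sp := spanl A b (q / Td) (q mod Td)).
    destruct (t mod 2 =? 0).
    + unfold freq. pose proof (count_occ_bound Nat.eq_dec (modeof sp) sp).
      assert (length sp <= n) by (unfold sp, spanl; rewrite length_firstn, length_skipn; fold n; lia). lia.
    + pose proof (modeof_lt sp _ (spanl_forall A b _ _ _ HV) V0). lia.
Qed.

Definition prog : program := [
  IConst 3 1; IConst 4 0; ILoad 4 4; IAdd 4 4 1; ILoad 4 4;
  IConst 5 1; ILoad 5 5; IAdd 5 5 2; ILoad 5 5; IAdd 4 4 5;
  ILoad 6 4; IAdd 4 4 3; ILoad 0 4; IAdd 7 1 21; IConst 8 2;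
  ILoad 8 8; IAdd 8 8 1; ILoad 8 8; IAdd 9 2 3; IConst 10 3;
  ILoad 10 10; IConst 11 4; ILoad 11 11; IConst 12 5; ILoad 12 12;
  IConst 13 6; ILoad 13 13; IConst 14 0;
  (*28 LOOP*) ILt 19 7 8; IJz 19 48;
  IAdd 4 10 7; ILoad 15 4; IAdd 4 11 7; ILoad 16 4; IAdd 4 13 7; ILoad 17 4;
  (*36 INNER*) IAdd 18 15 6; ILt 19 18 16; IJz 19 46; IAdd 4 12 18;
  ILoad 20 4; ILt 19 20 9; IJz 19 46; IAdd 6 6 3; IAdd 0 17 21; IJmp 36;
  (*46 NEXT*) IAdd 7 7 3; IJmp 28;
  (*48 DONE*) IJz 14 50; IHalt;
  (*50 SECOND*) IConst 14 1;
  IConst 4 11; ILoad 4 4; IAdd 4 4 2; ILoad 7 4;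
  IConst 4 12; ILoad 4 4; IAdd 4 4 2; ILoad 8 4;
  IConst 4 13; ILoad 4 4; IAdd 4 4 1; ILoad 9 4;
  IConst 10 7; ILoad 10 10; IConst 11 8; ILoad 11 11;
  IConst 12 9; ILoad 12 12; IConst 13 10; ILoad 13 13; IJmp 28 ].

Definition Safe (w : nat) (P : program) (n : nat) (s : state) (Q : (nat -> nat) -> Prop) : Prop :=
  exists t Rf, t <= n /\ exec w P t s = Some Rf /\ Q Rf.

Lemma safe_mono w P n m s Q : n <= m -> Safe w P n s Q -> Safe w P m s Q.
Proof. intros H [t [Rf [H1 H2]]]. exists t, Rf. split; [lia|auto]. Qed.

Lemma safe_step w P n s ins Q : nth_error P (pc s) = Some ins -> ins <> IHalt ->
  Safe w P n (step w ins s) Q -> Safe w P (S n) s Q.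
Proof.
  intros H1 H2 [t [Rf [H3 [H4 H5]]]]. exists (S t), Rf. split; [lia|]. split; auto.
  simpl. rewrite H1. destruct ins; auto. congruence.
Qed.

Lemma safe_halt w P n s Q : nth_error P (pc s) = Some IHalt -> Q (regs s) -> Safe w P (S n) s Q.
Proof. intros H1 H2. exists 1, (regs s). split; [lia|]. simpl. rewrite H1. auto. Qed.

Lemma wmod_small w v : v < 2 ^ w -> wmod w v = v.
Proof. intros; unfold wmod; apply Nat.mod_small; auto. Qed.

Section Steps.
Variables (w : nat) (P : program) (n : nat) (Q : (nat -> nat) -> Prop) (pc0 : nat) (R M : nat -> nat).

Lemma s_const d c : nth_error P pc0 = Some (IConst d c) -> c < 2 ^ w ->
  Safe w P (n - 1) (mkState (S pc0) (upd R d c) M) Q -> 1 <= n -> Safe w P n (mkState pc0 R M) Q.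
Proof. intros H1 H2 H3 H4. replace n with (S (n - 1)) by lia. eapply safe_step; eauto. congruence. simpl. unfold arith. simpl. rewrite wmod_small; auto. Qed.

Lemma s_add d a b : nth_error P pc0 = Some (IAdd d a b) -> R a + R b < 2 ^ w ->
  Safe w P (n - 1) (mkState (S pc0) (upd R d (R a + R b)) M) Q -> 1 <= n -> Safe w P n (mkState pc0 R M) Q.
Proof. intros H1 H2 H3 H4. replace n with (S (n - 1)) by lia. eapply safe_step; eauto. congruence. simpl. unfold arith. simpl. rewrite wmod_small; auto. Qed.

Lemma s_lt d a b : nth_error P pc0 = Some (ILt d a b) -> 1 < 2 ^ w ->
  Safe w P (n - 1) (mkState (S pc0) (upd R d (if R a <? R b then 1 else 0)) M) Q -> 1 <= n -> Safe w P n (mkState pc0 R M) Q.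
Proof. intros H1 H2 H3 H4. replace n with (S (n - 1)) by lia. eapply safe_step; eauto. congruence. simpl. unfold arith. simpl.
  rewrite wmod_small; auto. destruct (R a <? R b); lia. Qed.

Lemma s_load d a : nth_error P pc0 = Some (ILoad d a) -> M (R a) < 2 ^ w ->
  Safe w P (n - 1) (mkState (S pc0) (upd R d (M (R a))) M) Q -> 1 <= n -> Safe w P n (mkState pc0 R M) Q.
Proof. intros H1 H2 H3 H4. replace n with (S (n - 1)) by lia. eapply safe_step; eauto. congruence. simpl. unfold arith. simpl. rewrite wmod_small; auto. Qed.

Lemma s_jz r t : nth_error P pc0 = Some (IJz r t) -> True ->
  Safe w P (n - 1) (mkState (if R r =? 0 then t else S pc0) R M) Q -> 1 <= n -> Safe w P n (mkState pc0 R M) Q.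
Proof. intros H1 H2 H3 H4. replace n with (S (n - 1)) by lia. eapply safe_step; eauto. congruence. Qed.

Lemma s_jmp t : nth_error P pc0 = Some (IJmp t) -> True ->
  Safe w P (n - 1) (mkState t R M) Q -> 1 <= n -> Safe w P n (mkState pc0 R M) Q.
Proof. intros H1 H2 H3 H4. replace n with (S (n - 1)) by lia. eapply safe_step; eauto. congruence. Qed.
End Steps.

Ltac regs_simpl :=
  cbn [upd Nat.eqb] in *;
  repeat match goal with H : ?R ?k = _ |- context[?R ?k] => is_var R; rewrite H end.

Ltac stp side :=
  first [ eapply s_const; [reflexivity| | |]
        | eapply s_add; [reflexivity| | |]
        | eapply s_lt; [reflexivity| | |]
        | eapply s_load; [reflexivity| | |]
        | eapply s_jz; [reflexivity| | |]
        | eapply s_jmp; [reflexivity| | |] ];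
  [ regs_simpl; side | | lia ].

Lemma safe_S_of_minus w P n s Q : Safe w P n s Q -> Safe w P (S n) s Q.
Proof. apply safe_mono; lia. Qed.

Ltac stpS side :=
  first [ eapply s_const with (n := S _); [reflexivity| | |]
        | eapply s_add with (n := S _); [reflexivity| | |]
        | eapply s_lt with (n := S _); [reflexivity| | |]
        | eapply s_load with (n := S _); [reflexivity| | |]
        | eapply s_jz with (n := S _); [reflexivity| | |]
        | eapply s_jmp with (n := S _); [reflexivity| | |] ];
  [ regs_simpl; side | rewrite Nat.sub_1_r; cbn [Nat.pred upd Nat.eqb] | lia ].

Ltac sidet Hm := solve [ auto | lia | eapply proj2, Hm; lia | eapply proj1, Hm; lia ].

Ltac ltbT a b := rewrite (proj2 (Nat.ltb_lt a b)) by lia.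
Ltac ltbF a b := rewrite (proj2 (Nat.ltb_ge a b)) by lia.

Ltac frame_tac := unfold upd;
  repeat match goal with |- context [?r =? ?k] => destruct (Nat.eqb_spec r k); [lia|] end; auto.

Section Loops.
Variables (w : nat) (M : nat -> nat).
Hypothesis HW1 : 1 < 2 ^ w.

Lemma inner_loop (g0 e x VB B1 c : nat)
  (Hc : forall h, (g0 + h < e /\ M (VB + (g0 + h)) < B1) <-> h < c)
  (Hm : forall g, g < e -> VB + g < 2 ^ w /\ M (VB + g) < 2 ^ w)
  (Hx : x < 2 ^ w) :
  forall d f R n0 Q, c - f = d -> R 15 = g0 -> R 16 = e -> R 17 = x -> R 6 = f -> R 12 = VB ->
  R 9 = B1 -> R 3 = 1 -> R 21 = 0 -> g0 + Nat.max f c + 1 < 2 ^ w ->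
  (forall R', R' 6 = Nat.max f c -> R' 0 = (if f <? c then x else R 0) ->
     (forall r, r <> 0 -> r <> 4 -> r <> 6 -> r <> 18 -> r <> 19 -> r <> 20 -> R' r = R r) ->
     Safe w prog n0 (mkState 46 R' M) Q) ->
  Safe w prog (n0 + 10 * d + 7) (mkState 36 R M) Q.
Proof.
  induction d; intros f R n0 Q Hd H15 H16 H17 H6 H12 H9 H3 H21 Hb K.
  -
    stp ltac:(sidet Hm). stp ltac:(sidet Hm). stp ltac:(sidet Hm). regs_simpl.
    destruct (Nat.ltb_spec (g0 + f) e).
    + simpl.
      stp ltac:(sidet Hm). stp ltac:(sidet Hm). stp ltac:(sidet Hm). stp ltac:(sidet Hm). regs_simpl.
      assert (~ (M (VB + (g0 + f)) < B1)).
      { intros C. assert (f < c) by (apply Hc; auto). lia. }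
      ltbF (M (VB + (g0 + f))) B1. simpl.
      eapply safe_mono; [|apply K]. lia.
      * regs_simpl. lia.
      * regs_simpl. ltbF f c. auto.
      * intros r Z0 Z4 Z5 Z18 Z19 Z20. frame_tac.
    + simpl.
      eapply safe_mono; [|apply K]. lia.
      * regs_simpl. lia.
      * regs_simpl. assert (~ f < c). { intros C. apply Hc in C. lia. } ltbF f c. auto.
      * intros r Z0 Z4 Z5 Z18 Z19 Z20. frame_tac.
  - assert (Hf : f < c) by lia. apply Hc in Hf. destruct Hf as [Hf1 Hf2].
    stp ltac:(sidet Hm). stp ltac:(sidet Hm). stp ltac:(sidet Hm). regs_simpl.
    ltbT (g0 + f) e. simpl.
    stp ltac:(sidet Hm). stp ltac:(sidet Hm). stp ltac:(sidet Hm). stp ltac:(sidet Hm). regs_simpl.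
    ltbT (M (VB + (g0 + f))) B1. simpl.
    stp ltac:(sidet Hm). stp ltac:(sidet Hm). stp ltac:(sidet Hm).
    eapply safe_mono; [|eapply (IHd (S f) _ n0)]; try (regs_simpl; auto; lia).
    intros R' E6 E0 Ef. apply K.
    + rewrite E6. lia.
    + rewrite E0. regs_simpl. destruct (S f <? c); ltbT f c; auto.
    + intros r Z0 Z4 Z5 Z18 Z19 Z20. rewrite Ef by auto. frame_tac.
Qed.
End Loops.

Fixpoint phaseg (cc xv : nat -> nat) (p cnt f m : nat) : nat * nat :=
  match cnt with
  | 0 => (f, m)
  | S k => if f <? cc p then phaseg cc xv (S p) k (cc p) (xv p) else phaseg cc xv (S p) k f m
  end.

Lemma phaseg_S cc xv p k f m : phaseg cc xv p (S k) f m =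
  phaseg cc xv (S p) k (Nat.max f (cc p)) (if f <? cc p then xv p else m).
Proof.
  simpl. destruct (Nat.ltb_spec f (cc p)).
  - rewrite Nat.max_r by lia. auto.
  - rewrite Nat.max_l by lia. auto.
Qed.

Lemma phaseg_mono cc xv p k f m : f <= fst (phaseg cc xv p k f m).
Proof.
  revert p f m; induction k; intros; simpl; auto.
  destruct (Nat.ltb_spec f (cc p)). specialize (IHk (S p) (cc p) (xv p)); lia. auto.
Qed.

Section Outer.
Variables (w : nat) (M : nat -> nat) (GB EB AB VB B1 hi lo Fmax : nat) (Gv Ev xv cc : nat -> nat).
Hypothesis HW1 : 1 < 2 ^ w.
Hypothesis Hpos : forall q, lo <= q < hi -> M (GB + q) = Gv q /\ M (EB + q) = Ev q /\ M (AB + q) = xv q.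
Hypothesis Hchk : forall q, lo <= q < hi -> forall h, (Gv q + h < Ev q /\ M (VB + (Gv q + h)) < B1) <-> h < cc q.
Hypothesis Hcc : forall q, lo <= q < hi -> cc q <= Fmax.
Hypothesis Hbig : forall q, lo <= q < hi -> GB + q < 2 ^ w /\ EB + q < 2 ^ w /\ AB + q < 2 ^ w /\
   Ev q < 2 ^ w /\ xv q < 2 ^ w /\ Gv q + Fmax + 1 < 2 ^ w.
Hypothesis Hvb : forall q g, lo <= q < hi -> g < Ev q -> VB + g < 2 ^ w /\ M (VB + g) < 2 ^ w.
Hypothesis Hhi : hi + 1 < 2 ^ w.

Lemma outer_loop : forall cnt p f m R n0 Q, hi - p = cnt -> lo <= p -> f <= Fmax ->
  R 7 = p -> R 8 = hi -> R 6 = f -> R 0 = m -> R 10 = GB -> R 11 = EB -> R 12 = VB -> R 13 = AB ->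
  R 9 = B1 -> R 3 = 1 -> R 21 = 0 ->
  (forall R', R' 6 = fst (phaseg cc xv p cnt f m) -> R' 0 = snd (phaseg cc xv p cnt f m) ->
     (forall r, r <> 0 -> r <> 4 -> r <> 6 -> r <> 7 -> r <> 15 -> r <> 16 -> r <> 17 -> r <> 18 ->
        r <> 19 -> r <> 20 -> R' r = R r) ->
     Safe w prog n0 (mkState 48 R' M) Q) ->
  Safe w prog (n0 + 17 * cnt + 10 * (fst (phaseg cc xv p cnt f m) - f) + 2) (mkState 28 R M) Q.
Proof.
  induction cnt; intros p f m R n0 Q Hd Hlo Hf H7 H8 H6 H0 H10 H11 H12 H13 H9 H3 H21 K.
  - stp ltac:(sidet Hvb). regs_simpl. ltbF p hi. simpl.
    stp ltac:(sidet Hvb). regs_simpl. simpl.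
    eapply safe_mono; [|apply K]; simpl; try lia.
    + regs_simpl. auto.
    + regs_simpl. auto.
    + intros r Z0 Z4 Z6 Z7 Z15 Z16 Z17 Z18 Z19 Z20. frame_tac.
  - assert (Hq : lo <= p < hi) by lia.
    destruct (Hpos p Hq) as [P1 [P2 P3]]. destruct (Hbig p Hq) as [B1' [B2 [B3 [B4 [B5 B6]]]]].
    pose proof (Hcc p Hq) as C1.
    rewrite phaseg_S. rewrite phaseg_S in K.
    set (f' := Nat.max f (cc p)). set (m' := if f <? cc p then xv p else m).
    stp ltac:(sidet Hvb). regs_simpl. ltbT p hi. simpl.
    stp ltac:(sidet Hvb). regs_simpl. simpl.
    stp ltac:(sidet Hvb). stp ltac:(lia).
    stp ltac:(sidet Hvb). stp ltac:(lia).
    stp ltac:(sidet Hvb). stp ltac:(lia).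
    pose proof (phaseg_mono cc xv (S p) cnt f' m') as PM.
    eapply safe_mono; [|eapply (inner_loop w M HW1 (Gv p) (Ev p) (xv p) VB B1 (cc p)
         (Hchk p Hq) (fun g Hg => Hvb p g Hq Hg) B5 _ f _ (n0 + 17 * cnt + 10 * (fst (phaseg cc xv (S p) cnt f' m') - f') + 2 + 2))];
      try (regs_simpl; auto; lia).
    + assert (f' = Nat.max f (cc p)) by (unfold f'; auto). clearbody f' m'. generalize dependent (fst (phaseg cc xv (S p) cnt f' m')). intros. clear -PM H. lia.
    + intros R' E6 E0 Ef.
      stp ltac:(rewrite !Ef by lia; regs_simpl; lia). stp ltac:(auto).
      eapply safe_mono; [|eapply (IHcnt (S p) f' m' _ n0)].
      all: try (intros R'' F6 F0 Ff; apply K; auto;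
        intros r Z0 Z4 Z6 Z7 Z15 Z16 Z17 Z18 Z19 Z20; rewrite Ff by auto;
        unfold upd; destruct (Nat.eqb_spec r 7); [lia|]; rewrite Ef by auto; frame_tac).
      all: regs_simpl; try rewrite !Ef by lia; regs_simpl; try rewrite E6; try rewrite E0; auto; try lia.
Qed.
End Outer.

Lemma phaseg_phase X jj p cnt f m : phaseg (ccv X jj) (xat X) p cnt f m = phase X jj p cnt f m.
Proof. revert p f m; induction cnt; intros; simpl; auto. destruct (f <? ccv X jj p); auto. Qed.

Section Run.
Variables (w : nat) (M : nat -> nat) (n V Cmax T kG : nat) (X : list nat).
Hypothesis HW1 : 1 < 2 ^ w.
Hypothesis HXn : length X = n.
Hypothesis HXV : Forall (fun x => x < V) X.
Hypothesis HV : 0 < V.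
Hypothesis HMX : forall q, q <= n -> M (base kG n + q) = Gp X q /\ M (base (kG + 1) n + q) = EXp X q /\
   M (base (kG + 2) n + q) = nth q (POS X V) 0 /\ M (base (kG + 3) n + q) = xat X q.
Hypothesis HMb : forall a, a < T -> M a <= Cmax.
Hypothesis Hk : base (kG + 3) n + n < T.
Hypothesis HW : Cmax + T + 2 * n + 5 < 2 ^ w.

Lemma phase_run lo hi jj f m R n0 Q : 1 <= lo -> hi <= n + 1 -> jj <= n -> f <= n ->
  R 7 = lo -> R 8 = hi -> R 6 = f -> R 0 = m -> R 10 = base kG n -> R 11 = base (kG + 1) n ->
  R 12 = base (kG + 2) n -> R 13 = base (kG + 3) n ->
  R 9 = S jj -> R 3 = 1 -> R 21 = 0 ->
  (forall R', R' 6 = fst (phase X jj lo (hi - lo) f m) -> R' 0 = snd (phase X jj lo (hi - lo) f m) ->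
     (forall r, r <> 0 -> r <> 4 -> r <> 6 -> r <> 7 -> r <> 15 -> r <> 16 -> r <> 17 -> r <> 18 ->
        r <> 19 -> r <> 20 -> R' r = R r) ->
     Safe w prog n0 (mkState 48 R' M) Q) ->
  Safe w prog (n0 + 17 * (hi - lo) + 10 * (fst (phase X jj lo (hi - lo) f m) - f) + 2) (mkState 28 R M) Q.
Proof.
  intros Hlo Hhi Hjj Hf H7 H8 H6 H0 H10 H11 H12 H13 H9 H3 H21 K.
  assert (Hb0 : base kG n < base (kG + 1) n /\ base (kG + 1) n < base (kG + 2) n /\ base (kG + 2) n < base (kG + 3) n)
    by (unfold base; nia).
  assert (HGE : forall q, Gp X q <= n /\ EXp X q <= n) by (intros q; rewrite <- HXn; apply (Gp_le X V); auto).
  rewrite <- !phaseg_phase. rewrite <- !phaseg_phase in K.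
  apply (outer_loop w M (base kG n) (base (kG + 1) n) (base (kG + 3) n) (base (kG + 2) n) (S jj) hi lo n
    (Gp X) (EXp X) (xat X) (ccv X jj)); auto.
  - intros q Hq. destruct (HMX q ltac:(lia)) as [A1 [A2 [A3 A4]]]. auto.
  - intros q Hq h. destruct (HMX q ltac:(lia)) as [A1 [A2 [A3 A4]]].
    pose proof (check_iff X V q jj h HXV (xat_lt X V q HXV HV) ltac:(lia)) as CI.
    unfold ccv. rewrite <- CI.
    destruct (HGE q).
    split; intros [Q1 Q2]; split; auto.
    + destruct (HMX (Gp X q + h) ltac:(lia)) as [_ [_ [E _]]]. rewrite E in Q2; auto.
    + destruct (HMX (Gp X q + h) ltac:(lia)) as [_ [_ [E _]]]. rewrite E; auto.
  - intros q Hq. unfold ccv. pose proof (Cnt_lip X (xat X q) 0 jj ltac:(lia)). rewrite Cnt_0 in H. lia.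
  - intros q Hq. destruct (HMX q ltac:(lia)) as [A1 [A2 [A3 A4]]]. destruct (HGE q) as [G1 G2].
    pose proof (HMb (base (kG + 3) n + q) ltac:(lia)) as Y. rewrite A4 in Y. lia.
  - intros q g Hq Hg. destruct (HGE q) as [G1 G2]. split. lia. apply Nat.le_lt_trans with Cmax. apply HMb. lia. lia.
  - lia.
Qed.
End Run.

Definition hi1f (A : list nat) (b i : nat) := Nat.min (b * Lbf b i + 1) (length A + 1).
Definition spf (A : list nat) (b i j : nat) := spanl A b (Lbf b i) (j / b).
Definition f0f (A : list nat) (b i j : nat) := freq (spf A b i j) (modeof (spf A b i j)).
Definition m0f (A : list nat) (b i j : nat) := modeof (spf A b i j).
Definition r1f (A : list nat) (b i j : nat) := phase A j i (hi1f A b i - i) (f0f A b i j) (m0f A b i j).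
Definition r2f (A : list nat) (b i j : nat) := phase (rev A) (length A + 1 - i) (length A + 1 - j) (j - b * (j / b))
   (fst (r1f A b i j)) (snd (r1f A b i j)).

Lemma mode_r2f A b i j : 1 <= b -> 1 <= i -> i <= j -> j <= length A ->
  is_mode (subarray A i j) (snd (r2f A b i j)).
Proof. intros. exact (main_mode A b i j H H0 H1 H2). Qed.

Lemma bound_r2f A b i j : 1 <= b -> 1 <= i -> i <= j -> j <= length A ->
  fst (r2f A b i j) <= f0f A b i j + 2 * b /\ fst (r2f A b i j) <= length A /\ f0f A b i j <= length A.
Proof. intros. split; [exact (f2_bound A b i j H H0 H1 H2)|split].
  exact (f2_le_n A b i j H H0 H1 H2). exact (f0_le_n A b i j H H0 H1 H2). Qed.

Lemma cell_arr' A b k p a : k < 14 -> p <= length A -> a = base k (length A) + p ->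
  nth a (Dmk A b) 0 = arr A b k p.
Proof.
  intros. subst. rewrite nth_Dmk. apply cell_arr; auto.
  unfold total, base, TBase. nia.
Qed.

Ltac stp2 side := stp side; cbn [upd Nat.eqb].

Section Full.
Variables (w : nat) (A : list nat) (b i j : nat).
Hypotheses (Hb : 1 <= b) (Hi : 1 <= i) (Hij : i <= j) (Hj : j <= length A).
Hypothesis HW : 2 * total A b + Vof A + 3 * length A + 10 < 2 ^ w.

Theorem full_run : Safe w prog (60 + 17 * (hi1f A b i - i) + 17 * (j - b * (j / b)) +
   10 * (fst (r2f A b i j) - f0f A b i j)) (query_state (Dmk A b) i j)
   (fun R => is_mode (subarray A i j) (R 0)).
Proof.
  set (n := length A) in *.
  set (T := total A b) in *. set (V := Vof A) in *. set (Cmax := T + V + n + 2).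
  assert (HV : 0 < V) by (unfold V, Vof; lia).
  assert (HAV := Vof_spec A). assert (HAVr := Vof_rev A). fold V in HAV, HAVr.
  assert (HMb : forall a, a < T -> nth a (Dmk A b) 0 <= Cmax).
  { intros a Ha. rewrite nth_Dmk by auto. apply cell_bound; auto. }
  assert (HT : TBase n + 2 * Tdim n b * Tdim n b <= T) by (unfold T, total; fold n; lia).
  assert (HLb := Lbf_lt n b i Hb ltac:(lia)). assert (HRb := div_lt_Tdim n b j Hb Hj).
  assert (HTab : TBase n + 2 * Tdim n b * Lbf b i + 2 * (j / b) + 1 < T).
  { assert (Tdim n b * Lbf b i + j / b + 1 <= Tdim n b * Tdim n b) by nia. lia. }
  assert (HW1 : 1 < 2 ^ w) by lia.
  assert (Hhi1 : i <= hi1f A b i <= n + 1).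
  { unfold hi1f, Lbf. fold n. pose proof (Nat.div_mod (i + b - 2) b ltac:(lia)).
    pose proof (Nat.mod_upper_bound (i + b - 2) b ltac:(lia)). lia. }
  assert (HRj : b * (j / b) <= j) by (pose proof (Nat.div_mod j b ltac:(lia)); lia).
  destruct (bound_r2f A b i j Hb Hi Hij Hj) as [Bd1 [Bd2 Bd3]]. fold n in Bd2, Bd3.
  pose proof (phase_mono A j i (hi1f A b i - i) (f0f A b i j) (m0f A b i j)) as PM1.
  assert (PM2 : fst (r1f A b i j) <= fst (r2f A b i j)) by (unfold r2f; apply phase_mono).
  fold (r1f A b i j) in PM1. 
  assert (Hm0 : m0f A b i j < V) by (apply modeof_lt; auto; apply spanl_forall; auto).
  set (M := fun a => nth a (Dmk A b) 0).
  assert (HMb' : forall a, a < T -> M a <= Cmax) by (intros; unfold M; auto).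
  assert (FH : forall a, a < 14 -> M a = base a n).
  { intros a Ha. unfold M. rewrite nth_Dmk by (unfold T, total, TBase in *; lia). apply cell_hdr; auto. }
  assert (FH0 := FH 0 ltac:(lia)). assert (FH1 := FH 1 ltac:(lia)). assert (FH2 := FH 2 ltac:(lia)).
  assert (FH3 := FH 3 ltac:(lia)). assert (FH4 := FH 4 ltac:(lia)). assert (FH5 := FH 5 ltac:(lia)).
  assert (FH6 := FH 6 ltac:(lia)). assert (FH7 := FH 7 ltac:(lia)). assert (FH8 := FH 8 ltac:(lia)).
  assert (FH9 := FH 9 ltac:(lia)). assert (FH10 := FH 10 ltac:(lia)). assert (FH11 := FH 11 ltac:(lia)).
  assert (FH12 := FH 12 ltac:(lia)). assert (FH13 := FH 13 ltac:(lia)). clear FH.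
  assert (FTR : M (base 0 n + i) = TBase n + 2 * Tdim n b * Lbf b i)
    by (unfold M; rewrite (cell_arr' A b 0 i); auto; lia).
  assert (FTC : M (base 1 n + j) = 2 * (j / b)) by (unfold M; rewrite (cell_arr' A b 1 j); auto; lia).
  assert (FPE : M (base 2 n + i) = hi1f A b i) by (unfold M; rewrite (cell_arr' A b 2 i); auto; lia).
  assert (F11 : M (base 11 n + j) = n + 1 - j) by (unfold M; rewrite (cell_arr' A b 11 j); auto; lia).
  assert (F12 : M (base 12 n + j) = n + 1 - b * (j / b)) by (unfold M; rewrite (cell_arr' A b 12 j); auto; lia).
  assert (F13 : M (base 13 n + i) = n + 2 - i) by (unfold M; rewrite (cell_arr' A b 13 i); auto; lia).
  assert (FTF : M (TBase n + 2 * Tdim n b * Lbf b i + 2 * (j / b)) = f0f A b i j).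
  { unfold M; rewrite nth_Dmk by lia. replace (TBase n + 2 * Tdim n b * Lbf b i + 2 * (j / b)) with
      (TBase n + 2 * Tdim n b * Lbf b i + 2 * (j / b) + 0) by lia.
    rewrite cell_tab by auto. auto. }
  assert (FTM : M (TBase n + 2 * Tdim n b * Lbf b i + 2 * (j / b) + 1) = m0f A b i j).
  { unfold M; rewrite nth_Dmk by lia. rewrite cell_tab by auto. auto. }
  assert (HMX1 : forall q, q <= n -> M (base 3 n + q) = Gp A q /\ M (base (3 + 1) n + q) = EXp A q /\
      M (base (3 + 2) n + q) = nth q (POS A V) 0 /\ M (base (3 + 3) n + q) = xat A q).
  { intros q Hq. unfold M; refine (conj _ (conj _ (conj _ _))); [rewrite (cell_arr' A b 3 q)|rewrite (cell_arr' A b 4 q)|rewrite (cell_arr' A b 5 q)|rewrite (cell_arr' A b 6 q)]; auto; lia. }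
  assert (HMX2 : forall q, q <= n -> M (base 7 n + q) = Gp (rev A) q /\ M (base (7 + 1) n + q) = EXp (rev A) q /\
      M (base (7 + 2) n + q) = nth q (POS (rev A) V) 0 /\ M (base (7 + 3) n + q) = xat (rev A) q).
  { intros q Hq. unfold M; refine (conj _ (conj _ (conj _ _))); [rewrite (cell_arr' A b 7 q)|rewrite (cell_arr' A b 8 q)|rewrite (cell_arr' A b 9 q)|rewrite (cell_arr' A b 10 q)]; auto; lia. }
  assert (Hk1 : base (3 + 3) n + n < T) by (unfold base, TBase in *; lia).
  assert (Hk2 : base (7 + 3) n + n < T) by (unfold base, TBase in *; lia).
  assert (HWr : Cmax + T + 2 * n + 5 < 2 ^ w) by (unfold Cmax; lia).
  unfold query_state. fold M. clearbody M. clear HMb.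
  assert (Hn : length A = n) by reflexivity. clearbody Cmax T V. clearbody n.
  eapply (safe_mono _ _ (28 + (32 + 17 * (hi1f A b i - i) + 17 * (j - b * (j / b)) +
   10 * (fst (r2f A b i j) - f0f A b i j)))); [lia|].
  stpS ltac:(clear -HW HT Bd3 Hm0 HTab Hhi1 HRj Hj Hij Hi Hb HW1; unfold base, TBase in *; lia).
  stpS ltac:(clear -HW HT Bd3 Hm0 HTab Hhi1 HRj Hj Hij Hi Hb HW1; unfold base, TBase in *; lia).
  stpS ltac:(clear -HW HT Bd3 Hm0 HTab Hhi1 HRj Hj Hij Hi Hb HW1; unfold base, TBase in *; lia).
  stpS ltac:(clear -HW HT Bd3 Hm0 HTab Hhi1 HRj Hj Hij Hi Hb HW1; unfold base, TBase in *; lia).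
  stpS ltac:(clear -HW HT Bd3 Hm0 HTab Hhi1 HRj Hj Hij Hi Hb HW1; unfold base, TBase in *; lia).
  stpS ltac:(clear -HW HT Bd3 Hm0 HTab Hhi1 HRj Hj Hij Hi Hb HW1; unfold base, TBase in *; lia).
  stpS ltac:(clear -HW HT Bd3 Hm0 HTab Hhi1 HRj Hj Hij Hi Hb HW1; unfold base, TBase in *; lia).
  stpS ltac:(clear -HW HT Bd3 Hm0 HTab Hhi1 HRj Hj Hij Hi Hb HW1; unfold base, TBase in *; lia).
  stpS ltac:(clear -HW HT Bd3 Hm0 HTab Hhi1 HRj Hj Hij Hi Hb HW1; unfold base, TBase in *; lia).
  stpS ltac:(clear -HW HT Bd3 Hm0 HTab Hhi1 HRj Hj Hij Hi Hb HW1; unfold base, TBase in *; lia).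
  stpS ltac:(clear -HW HT Bd3 Hm0 HTab Hhi1 HRj Hj Hij Hi Hb HW1; unfold base, TBase in *; lia).
  stpS ltac:(clear -HW HT Bd3 Hm0 HTab Hhi1 HRj Hj Hij Hi Hb HW1; unfold base, TBase in *; lia).
  stpS ltac:(clear -HW HT Bd3 Hm0 HTab Hhi1 HRj Hj Hij Hi Hb HW1; unfold base, TBase in *; lia).
  stpS ltac:(clear -HW HT Bd3 Hm0 HTab Hhi1 HRj Hj Hij Hi Hb HW1; unfold base, TBase in *; lia).
  stpS ltac:(clear -HW HT Bd3 Hm0 HTab Hhi1 HRj Hj Hij Hi Hb HW1; unfold base, TBase in *; lia).
  stpS ltac:(clear -HW HT Bd3 Hm0 HTab Hhi1 HRj Hj Hij Hi Hb HW1; unfold base, TBase in *; lia).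
  stpS ltac:(clear -HW HT Bd3 Hm0 HTab Hhi1 HRj Hj Hij Hi Hb HW1; unfold base, TBase in *; lia).
  stpS ltac:(clear -HW HT Bd3 Hm0 HTab Hhi1 HRj Hj Hij Hi Hb HW1; unfold base, TBase in *; lia).
  stpS ltac:(clear -HW HT Bd3 Hm0 HTab Hhi1 HRj Hj Hij Hi Hb HW1; unfold base, TBase in *; lia).
  stpS ltac:(clear -HW HT Bd3 Hm0 HTab Hhi1 HRj Hj Hij Hi Hb HW1; unfold base, TBase in *; lia).
  stpS ltac:(clear -HW HT Bd3 Hm0 HTab Hhi1 HRj Hj Hij Hi Hb HW1; unfold base, TBase in *; lia).
  stpS ltac:(clear -HW HT Bd3 Hm0 HTab Hhi1 HRj Hj Hij Hi Hb HW1; unfold base, TBase in *; lia).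
  stpS ltac:(clear -HW HT Bd3 Hm0 HTab Hhi1 HRj Hj Hij Hi Hb HW1; unfold base, TBase in *; lia).
  stpS ltac:(clear -HW HT Bd3 Hm0 HTab Hhi1 HRj Hj Hij Hi Hb HW1; unfold base, TBase in *; lia).
  stpS ltac:(clear -HW HT Bd3 Hm0 HTab Hhi1 HRj Hj Hij Hi Hb HW1; unfold base, TBase in *; lia).
  stpS ltac:(clear -HW HT Bd3 Hm0 HTab Hhi1 HRj Hj Hij Hi Hb HW1; unfold base, TBase in *; lia).
  stpS ltac:(clear -HW HT Bd3 Hm0 HTab Hhi1 HRj Hj Hij Hi Hb HW1; unfold base, TBase in *; lia).
  stpS ltac:(clear -HW HT Bd3 Hm0 HTab Hhi1 HRj Hj Hij Hi Hb HW1; unfold base, TBase in *; lia).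
  eapply safe_mono; [| eapply (phase_run w M n V Cmax T 3 A HW1 Hn HAV HV HMX1 HMb' Hk1 HWr i (hi1f A b i) j
      (f0f A b i j) (m0f A b i j) _ (27 + 17 * (j - b * (j / b)) + 10 * (fst (r2f A b i j) - fst (r1f A b i j))))].
  { fold (r1f A b i j). lia. }
  all: try (regs_simpl; auto; lia).
  intros R1 E6 E0 Ef. fold (r1f A b i j) in E6, E0.
  assert (E1 : R1 1 = i) by (rewrite Ef by lia; reflexivity).
  assert (E2 : R1 2 = j) by (rewrite Ef by lia; reflexivity).
  assert (E3 : R1 3 = 1) by (rewrite Ef by lia; reflexivity).
  assert (E21 : R1 21 = 0) by (rewrite Ef by lia; reflexivity).
  assert (E14 : R1 14 = 0) by (rewrite Ef by lia; reflexivity).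
  clear Ef.
  eapply (safe_mono _ _ (23 + (4 + 17 * (j - b * (j / b)) + 10 * (fst (r2f A b i j) - fst (r1f A b i j))))); [lia|].
  stpS ltac:(auto). rewrite E14. cbn [Nat.eqb].
  stpS ltac:(clear -HW HT Bd3 Hm0 HTab Hhi1 HRj Hj Hij Hi Hb HW1; unfold base, TBase in *; lia).
  stpS ltac:(clear -HW HT Bd3 Hm0 HTab Hhi1 HRj Hj Hij Hi Hb HW1; unfold base, TBase in *; lia).
  stpS ltac:(clear -HW HT Bd3 Hm0 HTab Hhi1 HRj Hj Hij Hi Hb HW1; unfold base, TBase in *; lia).
  stpS ltac:(clear -HW HT Bd3 Hm0 HTab Hhi1 HRj Hj Hij Hi Hb HW1; unfold base, TBase in *; lia).
  stpS ltac:(clear -HW HT Bd3 Hm0 HTab Hhi1 HRj Hj Hij Hi Hb HW1; unfold base, TBase in *; lia).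
  stpS ltac:(clear -HW HT Bd3 Hm0 HTab Hhi1 HRj Hj Hij Hi Hb HW1; unfold base, TBase in *; lia).
  stpS ltac:(clear -HW HT Bd3 Hm0 HTab Hhi1 HRj Hj Hij Hi Hb HW1; unfold base, TBase in *; lia).
  stpS ltac:(clear -HW HT Bd3 Hm0 HTab Hhi1 HRj Hj Hij Hi Hb HW1; unfold base, TBase in *; lia).
  stpS ltac:(clear -HW HT Bd3 Hm0 HTab Hhi1 HRj Hj Hij Hi Hb HW1; unfold base, TBase in *; lia).
  stpS ltac:(clear -HW HT Bd3 Hm0 HTab Hhi1 HRj Hj Hij Hi Hb HW1; unfold base, TBase in *; lia).
  stpS ltac:(clear -HW HT Bd3 Hm0 HTab Hhi1 HRj Hj Hij Hi Hb HW1; unfold base, TBase in *; lia).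
  stpS ltac:(clear -HW HT Bd3 Hm0 HTab Hhi1 HRj Hj Hij Hi Hb HW1; unfold base, TBase in *; lia).
  stpS ltac:(clear -HW HT Bd3 Hm0 HTab Hhi1 HRj Hj Hij Hi Hb HW1; unfold base, TBase in *; lia).
  stpS ltac:(clear -HW HT Bd3 Hm0 HTab Hhi1 HRj Hj Hij Hi Hb HW1; unfold base, TBase in *; lia).
  stpS ltac:(clear -HW HT Bd3 Hm0 HTab Hhi1 HRj Hj Hij Hi Hb HW1; unfold base, TBase in *; lia).
  stpS ltac:(clear -HW HT Bd3 Hm0 HTab Hhi1 HRj Hj Hij Hi Hb HW1; unfold base, TBase in *; lia).
  stpS ltac:(clear -HW HT Bd3 Hm0 HTab Hhi1 HRj Hj Hij Hi Hb HW1; unfold base, TBase in *; lia).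
  stpS ltac:(clear -HW HT Bd3 Hm0 HTab Hhi1 HRj Hj Hij Hi Hb HW1; unfold base, TBase in *; lia).
  stpS ltac:(clear -HW HT Bd3 Hm0 HTab Hhi1 HRj Hj Hij Hi Hb HW1; unfold base, TBase in *; lia).
  stpS ltac:(clear -HW HT Bd3 Hm0 HTab Hhi1 HRj Hj Hij Hi Hb HW1; unfold base, TBase in *; lia).
  stpS ltac:(clear -HW HT Bd3 Hm0 HTab Hhi1 HRj Hj Hij Hi Hb HW1; unfold base, TBase in *; lia).
  stpS ltac:(clear -HW HT Bd3 Hm0 HTab Hhi1 HRj Hj Hij Hi Hb HW1; unfold base, TBase in *; lia).
  assert (Er2 : r2f A b i j = phase (rev A) (n + 1 - i) (n + 1 - j) (j - b * (j / b)) (fst (r1f A b i j)) (snd (r1f A b i j)))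
    by (unfold r2f; rewrite Hn; auto).
  assert (EQc : n + 1 - b * (j / b) - (n + 1 - j) = j - b * (j / b)) by lia.
  assert (HXn2 : length (rev A) = n) by (rewrite length_rev; auto).
  rewrite Er2.
  eapply safe_mono; [| eapply (phase_run w M n V Cmax T 7 (rev A) HW1 HXn2 HAVr HV HMX2 HMb' Hk2 HWr (n + 1 - j) (n + 1 - b * (j / b)) (n + 1 - i)
      (fst (r1f A b i j)) (snd (r1f A b i j)) _ 2)].
  { rewrite EQc. lia. }
  all: try (regs_simpl; auto; lia).
  rewrite EQc. rewrite <- Er2.
  intros R2 G6 G0 Gf.
  assert (G14 : R2 14 = 1) by (rewrite Gf by lia; reflexivity). clear Gf.
  stpS ltac:(auto). rewrite G14. cbn [Nat.eqb].
  apply safe_halt; [reflexivity|]. simpl. rewrite G0. apply mode_r2f; auto. lia.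
Qed.

End Full.

Definition bsz (eps : R) (n : nat) : nat := Z.to_nat (up (Rpower (INR n) eps)).

Lemma Rpower_pos x y : (0 < Rpower x y)%R.
Proof. unfold Rpower. apply exp_pos. Qed.

Lemma bsz_spec eps n : (0 <= eps)%R -> (1 <= n)%nat ->
  (1 <= bsz eps n)%nat /\ (Rpower (INR n) eps <= INR (bsz eps n))%R /\ (INR (bsz eps n) <= 2 * Rpower (INR n) eps)%R.
Proof.
  intros He Hn. set (x := Rpower (INR n) eps).
  assert (Hx : (1 <= x)%R).
  { unfold x. rewrite <- (Rpower_O (INR n)) at 1 by (apply lt_0_INR; lia).
    apply Rle_Rpower; [apply (le_INR 1); auto | lra]. }
  destruct (archimed x) as [A1 A2].
  assert (Hz : (0 <= up x)%Z). { apply le_IZR. lra. }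
  assert (E : INR (bsz eps n) = IZR (up x)).
  { unfold bsz. fold x. rewrite INR_IZR_INZ, Z2Nat.id; auto. }
  rewrite E. split; [|split; lra].
  assert (0 < bsz eps n)%nat; [|lia]. apply INR_lt. simpl. lra.
Qed.

Lemma pow10_bound n u : (1 <= n)%nat -> (1 <= u)%nat -> (252 * n * n + u <= (n + u) ^ 10)%nat.
Proof.
  intros Hn Hu. replace ((n + u) ^ 10)%nat with ((n + u) ^ 2 * (n + u) ^ 8)%nat by (rewrite <- Nat.pow_add_r; auto).
  assert (256 <= (n + u) ^ 8)%nat. { replace 256%nat with (2 ^ 8)%nat by reflexivity. apply Nat.pow_le_mono_l. lia. }
  simpl (_ ^ 2). nia.
Qed.

Lemma total_real eps A : (0 <= eps <= 1/2)%R -> (1 <= length A)%nat ->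
  (INR (total A (bsz eps (length A))) <= 1000 * Rpower (INR (length A)) (2 - 2 * eps))%R.
Proof.
  intros [He0 He1] Hn. set (n := length A) in *. set (b := bsz eps n).
  destruct (bsz_spec eps n He0 Hn) as [Hb1 [Hb2 Hb3]]. fold b in Hb1, Hb2, Hb3.
  set (N := INR n) in *. set (x := Rpower N eps) in *. set (y := Rpower N (1 - eps)). set (Z := Rpower N (2 - 2 * eps)).
  assert (HN : (1 <= N)%R) by (unfold N; apply (le_INR 1); auto).
  assert (Hyy : (y * y = Z)%R).
  { unfold y, Z. rewrite <- Rpower_plus. f_equal. lra. }
  assert (Hy1 : (1 <= y)%R).
  { unfold y. rewrite <- (Rpower_O N) at 1 by lra. apply Rle_Rpower; lra. }
  assert (HZN : (N <= Z)%R).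
  { unfold Z. rewrite <- (Rpower_1 N) at 1 by lra. apply Rle_Rpower; lra. }
  assert (HNyx : (N = y * x)%R).
  { unfold y, x. rewrite <- Rpower_plus. replace (1 - eps + eps)%R with 1%R by lra. rewrite Rpower_1; lra. }
  assert (Hx0 : (0 < x)%R) by apply Rpower_pos.
  assert (Hq : (INR (n / b) <= y)%R).
  { assert (b * (n / b) <= n)%nat by (apply Nat.Div0.mul_div_le; lia).
    apply le_INR in H. rewrite mult_INR in H. fold N in H.
    assert (INR (n / b) * x <= y * x)%R.
    { pose proof (pos_INR (n / b)). rewrite <- HNyx. nra. }
    apply Rmult_le_reg_r with x; auto. }
  unfold total, TBase, Tdim. fold n. fold b.
  rewrite !plus_INR, !mult_INR, !plus_INR. fold N.
  replace (INR (S n)) with (N + 1)%R by (unfold N; rewrite S_INR; auto).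
  simpl (INR 14). simpl (INR 2).
  pose proof (pos_INR (n / b)).
  replace (INR 14) with 14%R by (simpl; lra).
  nra.
Qed.

Open Scope R_scope.
Theorem theorem1 :
  forall eps : R, 0 <= eps <= 1/2 ->
  exists (P : program) (D : nat -> list nat -> list nat) (c : R) (k : nat),
    0 < c /\
    forall (n u w : nat) (A : list nat),
      (1 <= n)%nat ->
      length A = n ->
      Forall (fun x => (x < u)%nat) A ->
      ((n + u) ^ k <= 2 ^ w)%nat ->
      Forall (fun x => (x < 2 ^ w)%nat) (D w A) /\
      INR (length (D w A)) <= c * Rpower (INR n) (2 - 2 * eps) /\
      forall i j : nat, (1 <= i)%nat -> (i <= j)%nat -> (j <= n)%nat ->
        exists (t : nat) (R : nat -> nat),
          exec w P t (query_state (D w A) i j) = Some R /\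
          INR t <= c * Rpower (INR n) eps /\
          is_mode (subarray A i j) (R 0%nat).
Proof.
  intros eps [He0 He1].
  exists prog, (fun w A => Dmk A (bsz eps (length A))), 1000%R, 10%nat.
  split; [lra|].
  intros n u w A Hn HA HAu Hw. subst n.
  set (n := length A) in *. set (b := bsz eps n).
  destruct (bsz_spec eps n He0 Hn) as [Hb1 [Hb2 Hb3]]. fold b in Hb1, Hb2, Hb3.
  assert (HAne : A <> []) by (intros E; unfold n in Hn; rewrite E in Hn; simpl in Hn; lia).
  assert (Hu : (1 <= u)%nat).
  { destruct A as [|a A']; [congruence|]. inversion HAu. lia. }
  assert (HVu : (Vof A <= u)%nat).
  { unfold Vof. pose proof (proj2 (list_max_lt u HAne) HAu). lia. }
  assert (Htot : (total A b <= 2 * n * n + 22 * n + 36)%nat).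
  { unfold total, TBase, Tdim. fold n.
    assert (n / b <= n)%nat by (apply Nat.Div0.div_le_upper_bound; nia). nia. }
  pose proof (pow10_bound n u Hn Hu).
  assert (HW : (2 * total A b + Vof A + 3 * length A + 10 < 2 ^ w)%nat) by (fold n; nia).
  split; [|split].
  - apply Forall_forall. intros v Hv. unfold Dmk in Hv. apply in_map_iff in Hv.
    destruct Hv as [a [<- Ha]]. apply in_seq in Ha.
    pose proof (cell_bound A b a Hb1 ltac:(lia)). fold n in H0. lia.
  - rewrite length_Dmk. apply total_real; auto.
  - intros i j Hi Hij Hj.
    destruct (full_run w A b i j Hb1 Hi Hij Hj HW) as [t [R [Ht [Hex Hq]]]].
    exists t, R. split; auto. split; auto.
    destruct (bound_r2f A b i j Hb1 Hi Hij Hj) as [Bd1 _].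
    assert (H1 : (hi1f A b i - i <= b)%nat).
    { unfold hi1f, Lbf. assert (b * ((i + b - 2) / b) <= i + b - 2)%nat by apply Nat.Div0.mul_div_le. lia. }
    assert (H2 : (j - b * (j / b) <= b)%nat).
    { pose proof (Nat.div_mod j b ltac:(lia)). pose proof (Nat.mod_upper_bound j b ltac:(lia)). lia. }
    assert (Ht' : (t <= 114 * b)%nat) by lia.
    apply le_INR in Ht'. rewrite mult_INR in Ht'. simpl (INR 114) in Ht'.
    fold n. lra.
Qed.
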